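(* For every $\varepsilon>0$ and every $1<p<\infty$, letting $q$ satisfy $1/p+1/q=1$, there exist $N\in\mathbb{N}$ and positive numbers $a_1\ge a_2\ge\dots\ge a_N>0$ such that $$\sum_{n=1}^N a_n>\varepsilon^{-2}\qquad\text{and}\qquad \sum_{n=1}^N\Big(\sum_{j=n}^N a_j^q\Big)^{p/q}<\varepsilon^p.$$ *)

(* Defs.v *)
From Stdlib Require Import Reals.
Open Scope R_scope.

Fixpoint sum_range (f : nat -> R) (m k : nat) : R :=
  match k with
  | O => 0
  | S k' => f m + sum_range f (S m) k'
  end.
Definition sum_from_to (f : nat -> R) (m n : nat) : R :=
  sum_range f m (S n - m).

(* Main.v *)
Require Import Defs.
From Stdlib Require Import Reals Lra Lia ZArith.
Open Scope R_scope.

Lemma exp_le_mono x y : x <= y -> exp x <= exp y.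
Proof. intros [H|H]. left; now apply exp_increasing. right; now subst. Qed.

Lemma ln_le_mono x y : 0 < x -> x <= y -> ln x <= ln y.
Proof. intros Hx [H|H]. left; now apply ln_increasing. right; now subst. Qed.

Lemma ln_upper x : 0 < x -> ln x <= x - 1.
Proof.
  intros Hx. rewrite <- (ln_exp (x - 1)). apply ln_le_mono; auto.
  pose proof (exp_ineq1_le (x-1)); lra.
Qed.

Lemma ln_lower x : 0 < x -> 1 - / x <= ln x.
Proof.
  intros Hx. pose proof (ln_upper (/ x) (Rinv_0_lt_compat _ Hx)).
  rewrite ln_Rinv in H by auto. lra.
Qed.

Lemma nat_unbounded x : exists N : nat, x < INR N.
Proof.
  destruct (archimed (Rabs x)) as [H1 _].
  exists (Z.to_nat (up (Rabs x))).
  rewrite INR_IZR_INZ, Z2Nat.id.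
  - pose proof (Rle_abs x); lra.
  - apply le_IZR. pose proof (Rabs_pos x). lra.
Qed.

Lemma sum_range_le f g m k :
  (forall i, (m <= i)%nat -> (i < m + k)%nat -> f i <= g i) ->
  sum_range f m k <= sum_range g m k.
Proof.
  revert m; induction k; intros m H; simpl. lra.
  apply Rplus_le_compat. apply H; lia.
  apply IHk; intros; apply H; lia.
Qed.

Lemma sum_range_pos f m k :
  (forall i, (m <= i)%nat -> (i < m + k)%nat -> 0 < f i) -> (0 < k)%nat ->
  0 < sum_range f m k.
Proof.
  revert m; induction k; intros m H Hk; simpl. lia.
  destruct k.
  - simpl. rewrite Rplus_0_r. apply H; lia.
  - apply Rplus_lt_0_compat. apply H; lia. apply IHk. intros; apply H; lia. lia.
Qed.

Lemma sum_range_scal c f m k :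
  sum_range (fun j => c * f j) m k = c * sum_range f m k.
Proof. revert m; induction k; intros m; simpl. ring. rewrite IHk; ring. Qed.

Lemma harm_lower k m : (1 <= m)%nat ->
  ln (INR (m + k)) - ln (INR m) <= sum_range (fun j => / INR j) m k.
Proof.
  revert m; induction k; intros m Hm; simpl.
  - rewrite Nat.add_0_r; lra.
  - specialize (IHk (S m) ltac:(lia)).
    replace (m + S k)%nat with (S m + k)%nat by lia.
    assert (Hp : 0 < INR m) by (apply lt_0_INR; lia).
    assert (ln (INR (S m)) - ln (INR m) <= / INR m).
    { rewrite S_INR.
      pose proof (ln_upper ((INR m + 1) * / INR m) ltac:(apply Rmult_lt_0_compat; [lra| now apply Rinv_0_lt_compat])).
      rewrite ln_mult, ln_Rinv in H by (try lra; now apply Rinv_0_lt_compat).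
      replace ((INR m + 1) * / INR m - 1) with (/ INR m) in H by (field; lra). lra. }
    lra.
Qed.

Lemma key s x : 0 < s -> 0 < x ->
  exp (-(s+1) * ln (x+1)) <= / s * (exp (- s * ln x) - exp (- s * ln (x+1))).
Proof.
  intros Hs Hx.
  set (u := ln x). set (v := ln (x+1)). set (d := v - u).
  assert (Hd : / (x+1) <= d).
  { unfold d, u, v. pose proof (ln_lower ((x+1) * / x) ltac:(apply Rmult_lt_0_compat; [lra| now apply Rinv_0_lt_compat])).
    rewrite ln_mult, ln_Rinv in H by (try lra; now apply Rinv_0_lt_compat).
    replace (1 - / ((x + 1) * / x)) with (/ (x+1)) in H by (field; lra). lra. }
  set (E := exp (- s * v)).
  assert (HE : 0 < E) by apply exp_pos.
  assert (H1 : exp (- s * u) = E * exp (s * d)).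
  { unfold E; rewrite <- exp_plus; f_equal; unfold d; ring. }
  assert (H2 : exp (-(s+1) * v) = E * / (x+1)).
  { unfold E. replace (-(s+1)*v) with (-s*v + - v) by ring. rewrite exp_plus, exp_Ropp.
    unfold v; rewrite exp_ln by lra; auto. }
  rewrite H1, H2. fold E.
  pose proof (exp_ineq1_le (s * d)) as HX.
  set (X := exp (s*d)) in *. set (y := / (x+1)) in *.
  assert (0 <= / s * E * (X - 1 - s * y)).
  { apply Rmult_le_pos. apply Rmult_le_pos. left; now apply Rinv_0_lt_compat. lra.
    assert (s * y <= s * d) by (apply Rmult_le_compat_l; lra). lra. }
  replace (/ s * (E * X - E)) with (/ s * E * (X - 1 - s*y) + E * y) by (field; lra).
  lra.
Qed.

Lemma tail1 s k n : 0 < s -> (1 <= n)%nat ->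
  sum_range (fun j => exp (-(s+1) * ln (INR j))) (S n) k <= / s * exp (- s * ln (INR n)).
Proof.
  intros Hs; revert n; induction k; intros n Hn; cbn [sum_range].
  - apply Rmult_le_pos. left; now apply Rinv_0_lt_compat. left; apply exp_pos.
  - specialize (IHk (S n) ltac:(lia)).
    assert (Hp : 0 < INR n) by (apply lt_0_INR; lia).
    pose proof (key s (INR n) Hs Hp). rewrite <- S_INR in H. lra.
Qed.

Lemma tail2 s k n : 0 < s -> (1 <= n)%nat ->
  sum_range (fun j => exp (-(s+1) * ln (INR j))) n k <= (1 + / s) * exp (- s * ln (INR n)).
Proof.
  intros Hs Hn. destruct k; cbn [sum_range].
  - apply Rmult_le_pos. pose proof (Rinv_0_lt_compat _ Hs); lra. left; apply exp_pos.
  - pose proof (tail1 s k n Hs Hn).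
    assert (0 <= ln (INR n)).
    { rewrite <- ln_1. apply ln_le_mono. lra. apply (le_INR 1); lia. }
    assert (exp (- (s + 1) * ln (INR n)) <= exp (- s * ln (INR n))) by (apply exp_le_mono; nra).
    lra.
Qed.

Theorem lemma3p1 :
  forall (eps p q : R), 0 < eps -> 1 < p -> / p + / q = 1 ->
  exists (N : nat) (a : nat -> R),
    (forall n, (1 <= n <= N)%nat -> 0 < a n) /\
    (forall n, (1 <= n < N)%nat -> a (S n) <= a n) /\
    sum_from_to a 1 N > / (eps ^ 2) /\
    sum_from_to (fun n => Rpower (sum_from_to (fun j => Rpower (a j) q) n N) (p / q)) 1 N
      < Rpower eps p.
Proof.
  intros eps p q He Hp Hpq.
  assert (Hq0 : q <> 0).
  { intro Hq; subst q. rewrite Rinv_0, Rplus_0_r in Hpq.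
    assert (p = 1) by (rewrite <- (Rinv_inv p), Hpq; apply Rinv_1). lra. }
  assert (Hqe : q = p / (p - 1)).
  { assert (/ q = 1 - / p) by lra.
    rewrite <- (Rinv_inv q), H. field. lra. }
  set (s := q - 1).
  assert (Hs : 0 < s).
  { unfold s. rewrite Hqe. apply (Rmult_lt_reg_r (p - 1)). lra.
    unfold Rdiv. rewrite Rmult_minus_distr_r, Rmult_assoc, Rinv_l by lra. lra. }
  set (r := p / q).
  assert (Hrs : r * s = 1). { unfold r, s. rewrite Hqe. field. lra. }
  assert (Hr : 0 < r). { unfold r. apply Rdiv_lt_0_compat; unfold s in Hs; lra. }
  assert (Hrq : r * q = p). { unfold r. field. auto. }
  set (L0 := r * ln (1 + / s)).
  set (B := 2 * / (eps ^ 2)).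
  assert (He2 : 0 < eps ^ 2) by (apply pow_lt; lra).
  assert (HB : 0 < B) by (unfold B; pose proof (Rinv_0_lt_compat _ He2); lra).
  set (Z := (p * ln B + L0 - p * ln eps) / (p - 1)).
  destruct (nat_unbounded (Rmax 1 (exp (exp Z)))) as [N HN].
  assert (HN1 : (1 <= N)%nat).
  { destruct N. simpl in HN. pose proof (Rmax_l 1 (exp (exp Z))). lra. lia. }
  set (H := sum_range (fun j => / INR j) 1 N).
  assert (HHZ : exp Z < H).
  { pose proof (harm_lower N 1 (le_n 1)) as Hh. fold H in Hh.
    change (INR 1) with 1 in Hh; rewrite ln_1 in Hh. replace (1 + N)%nat with (S N) in Hh by lia.
    rewrite S_INR in Hh.
    assert (exp (exp Z) < INR N + 1) by (pose proof (Rmax_r 1 (exp (exp Z))); lra).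
    apply ln_increasing in H0; [|apply exp_pos]. rewrite ln_exp in H0. lra. }
  assert (HH : 0 < H) by (pose proof (exp_pos Z); lra).
  assert (HlnH : Z < ln H) by (rewrite <- (ln_exp Z); apply ln_increasing; auto; apply exp_pos).
  set (c := B / H).
  assert (Hc : 0 < c) by (unfold c; apply Rdiv_lt_0_compat; auto).
  exists N, (fun j => c / INR j).
  split; [|split; [|split]].
  - intros n Hn. apply Rdiv_lt_0_compat; auto. apply lt_0_INR; lia.
  - intros n Hn. apply Rmult_le_compat_l; [lra|]. apply Rinv_le_contravar.
    apply lt_0_INR; lia. rewrite S_INR; lra.
  - unfold sum_from_to. replace (S N - 1)%nat with N by lia.
    unfold Rdiv. rewrite sum_range_scal. fold H. unfold c, B.
    replace (2 * / eps ^ 2 / H * H) with (2 * / eps ^ 2) by (field; lra).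
    pose proof (Rinv_0_lt_compat _ He2). lra.
  - set (D := exp (p * ln c + L0)).
    assert (Hterm : forall n, (1 <= n)%nat -> (n < 1 + N)%nat ->
      Rpower (sum_from_to (fun j => Rpower (c / INR j) q) n N) r <= D * / INR n).
    { intros n Hn1 Hn2. unfold sum_from_to.
      set (T := sum_range (fun j => Rpower (c / INR j) q) n (S N - n)).
      assert (HT : T = exp (q * ln c) * sum_range (fun j => exp (-(s+1) * ln (INR j))) n (S N - n)).
      { unfold T. rewrite <- sum_range_scal. apply Rle_antisym; apply sum_range_le;
        intros i Hi1 Hi2; right; unfold Rpower;
        assert (0 < INR i) by (apply lt_0_INR; lia);
        rewrite <- exp_plus; f_equal; unfold Rdiv; rewrite ln_mult, ln_Rinv;
        try apply Rinv_0_lt_compat; auto; unfold s; ring. }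
      assert (HTpos : 0 < T).
      { unfold T. apply sum_range_pos; [|lia]. intros i Hi1 Hi2. unfold Rpower; apply exp_pos. }
      assert (HU : T <= exp (q * ln c) * ((1 + / s) * exp (- s * ln (INR n)))).
      { rewrite HT. apply Rmult_le_compat_l. left; apply exp_pos. apply tail2; auto. }
      assert (Hn : 0 < INR n) by (apply lt_0_INR; lia).
      assert (Hs1 : 0 < 1 + / s) by (pose proof (Rinv_0_lt_compat _ Hs); lra).
      unfold Rpower. apply ln_le_mono in HU; auto.
      rewrite !ln_mult, !ln_exp in HU; try apply exp_pos; auto;
        try (apply Rmult_lt_0_compat; auto; apply exp_pos).
      unfold D. rewrite <- (exp_ln (INR n)) by auto. rewrite <- exp_Ropp, <- exp_plus.
      apply exp_le_mono.
      replace (p * ln c + L0 + - ln (INR n)) with (r * (q * ln c + (ln (1 + / s) + - s * ln (INR n)))).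
      + apply Rmult_le_compat_l; lra.
      + unfold L0. rewrite <- Hrq. replace (-ln (INR n)) with (- (r * s) * ln (INR n)) by (rewrite Hrs; ring). ring. }
    apply (Rle_lt_trans _ (sum_range (fun n => D * / INR n) 1 N)).
    { unfold sum_from_to at 1. replace (S N - 1)%nat with N by lia.
      apply sum_range_le. intros i Hi1 Hi2. apply Hterm; auto. }
    rewrite sum_range_scal. fold H. unfold D, Rpower.
    rewrite <- (exp_ln H) by auto. rewrite <- exp_plus. apply exp_increasing.
    unfold c, Rdiv. rewrite ln_mult, ln_Rinv by (auto; apply Rinv_0_lt_compat; auto).
    unfold Z in HlnH.
    apply (Rmult_lt_compat_l (p - 1)) in HlnH; [|lra].
    replace ((p - 1) * ((p * ln B + L0 - p * ln eps) / (p - 1))) with (p * ln B + L0 - p * ln eps) in HlnH by (field; lra).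
    nra.
Qed.
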